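(* For every $\theta>0$ there exists $C>0$ such that for all $n\in\mathbb{Z}^2$, all $\mu\in\mathbb{Z}$ and all dyadic $N_1,N_2,N_3\ge1$, $$\big|\Gamma^-_\mu(n)\cap\{|n_1|\sim N_1,\ |n_3|\sim N_3\}\big|\le C N_1N_3\max(N_1,N_3)^\theta,$$ $$\big|\Gamma^-_\mu(n)\cap\{|n_1|\sim N_1,\ |n_2|\sim N_2\}\big|\le C N_1N_2\max(N_1,N_2)^\theta.$$
   Context: For $n=(j,k)\in\mathbb{Z}^2$ let $|n|_-^2=j^2-k^2$ (hyperbolic modulus). For $n\in\mathbb{Z}^2$, $\Gamma(n)=\{(n_1,n_2,n_3)\in(\mathbb{Z}^2)^3: n_1-n_2+n_3=n,\ n\ne n_1,\ n\ne n_3\}$, and for $\mu\in\mathbb{Z}$, $\Gamma^-_\mu(n)=\{(n_1,n_2,n_3)\in\Gamma(n): |n|_-^2-|n_1|_-^2+|n_2|_-^2-|n_3|_-^2=\mu\}$. For dyadic $N\ge1$, $|m|\sim N$ means $\frac12N\le|m|<2N$ if $N\ge2$, and $|m|<2$ if $N=1$ ($|\cdot|$ the Euclidean norm). *)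

(* Defs.v *)
From Stdlib Require Import ZArith Reals List.
Open Scope Z_scope.

Definition Z2 := (Z * Z)%type.
Definition triple := (Z2 * Z2 * Z2)%type.

Definition add2 (a b : Z2) : Z2 := (fst a + fst b, snd a + snd b).
Definition sub2 (a b : Z2) : Z2 := (fst a - fst b, snd a - snd b).

Definition hypmod2 (m : Z2) : Z := fst m * fst m - snd m * snd m.
Definition eucl2 (m : Z2) : Z := fst m * fst m + snd m * snd m.

Definition Gamma (n : Z2) (t : triple) : Prop :=
  let '(n1, n2, n3) := t in
  add2 (sub2 n1 n2) n3 = n /\ n <> n1 /\ n <> n3.

Definition Gamma_minus (mu : Z) (n : Z2) (t : triple) : Prop :=
  Gamma n t /\
  (let '(n1, n2, n3) := t in
   hypmod2 n - hypmod2 n1 + hypmod2 n2 - hypmod2 n3 = mu).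

(* |m| ~ N for dyadic N >= 1 : N/2 <= |m| < 2N if N >= 2, |m| < 2 if N = 1
   (stated with squared norms, which is equivalent since both sides are >= 0) *)
Definition dsim (m : Z2) (N : Z) : Prop :=
  if N =? 1 then eucl2 m < 4
  else N * N <= 4 * eucl2 m /\ eucl2 m < 4 * (N * N).

(* |S| <= b : every duplicate-free finite list of elements of S has length <= b
   (in particular S is finite). *)
Definition card_le {T : Type} (S : T -> Prop) (b : R) : Prop :=
  forall l : list T, NoDup l -> (forall x, In x l -> S x) -> (INR (length l) <= b)%R.

Definition t1 (t : triple) : Z2 := fst (fst t).
Definition t2 (t : triple) : Z2 := snd (fst t).
Definition t3 (t : triple) : Z2 := snd t.

(* Main.v *)
Require Import Defs.
From Stdlib Require Import ZArith Reals List Lia Lra Classical.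
Open Scope Z_scope.

Definition cnt {T : Type} (S : T -> Prop) (b : Z) : Prop :=
  forall l : list T, NoDup l -> (forall x, In x l -> S x) -> Z.of_nat (length l) <= b.

Lemma cnt_mono {T} (S S' : T -> Prop) b b' :
  (forall x, S x -> S' x) -> cnt S' b -> b <= b' -> cnt S b'.
Proof. intros H H1 H2 l Hl Hi. specialize (H1 l Hl (fun x h => H x (Hi x h))). lia. Qed.

Lemma NoDup_map_inj {A B} (f : A -> B) (l : list A) :
  NoDup l -> (forall x y, In x l -> In y l -> f x = f y -> x = y) -> NoDup (map f l).
Proof.
  induction l as [|a l IH]; simpl; intros Hn Hi. constructor.
  inversion Hn; subst. constructor.
  - intro Hm. apply in_map_iff in Hm. destruct Hm as [y [Hy1 Hy2]].
    assert (y = a) by (apply Hi; auto). subst. contradiction.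
  - apply IH; auto.
Qed.

Lemma cnt_inj {A B} (S : A -> Prop) (S' : B -> Prop) (f : A -> B) b :
  (forall x y, S x -> S y -> f x = f y -> x = y) -> (forall x, S x -> S' (f x)) ->
  cnt S' b -> cnt S b.
Proof.
  intros Hi Hs H l Hl Hin. rewrite <- (length_map f).
  apply H. apply NoDup_map_inj; auto.
  intros y Hy. apply in_map_iff in Hy. destruct Hy as [x [<- Hx]]. auto.
Qed.

Lemma partition_ex {A} (P : A -> Prop) (l : list A) : NoDup l ->
  exists l1 l2, NoDup l1 /\ NoDup l2 /\ (forall x, In x l1 -> In x l /\ P x) /\
   (forall x, In x l2 -> In x l /\ ~ P x) /\ length l = (length l1 + length l2)%nat.
Proof.
  induction l as [|a l IH]; intros Hn.
  - exists nil, nil. simpl. split; [constructor|]. split; [constructor|]. 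
    split; [tauto|]. split; [tauto|]. reflexivity.
  - inversion Hn; subst. destruct (IH H2) as [l1 [l2 [N1 [N2 [I1 [I2 E]]]]]].
    destruct (classic (P a)) as [Pa|Pa].
    + exists (a :: l1), l2. simpl. split; [|split; [|split; [|split]]].
      * constructor; auto. intro h. apply I1 in h. tauto.
      * auto.
      * intros y [Hy|h]; [subst; auto|]. apply I1 in h; tauto.
      * intros y h; apply I2 in h; tauto.
      * lia.
    + exists l1, (a :: l2). simpl. split; [|split; [|split; [|split]]].
      * auto.
      * constructor; auto. intro h. apply I2 in h. tauto.
      * intros y h; apply I1 in h; tauto.
      * intros y [Hy|h]; [subst; auto|]. apply I2 in h; tauto.
      * lia.
Qed.

Lemma cnt_union {T} (S1 S2 : T -> Prop) b1 b2 :
  cnt S1 b1 -> cnt S2 b2 -> cnt (fun x => S1 x \/ S2 x) (b1 + b2).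
Proof.
  intros H1 H2 l Hl Hin.
  destruct (partition_ex S1 l Hl) as [l1 [l2 [N1 [N2 [I1 [I2 E]]]]]].
  rewrite E, Nat2Z.inj_add.
  specialize (H1 l1 N1 (fun x h => proj2 (I1 x h))).
  assert (Z.of_nat (length l2) <= b2).
  { apply H2; auto. intros x h. destruct (I2 x h) as [h1 h2]. destruct (Hin x h1); tauto. }
  lia.
Qed.

Lemma cnt_nonneg {T} (S : T -> Prop) b : cnt S b -> 0 <= b.
Proof. intro H. specialize (H nil (NoDup_nil _)). simpl in H. apply H. intros x []. Qed.

Lemma cnt_remove {T} (S : T -> Prop) b a : cnt S b -> S a ->
  cnt (fun x => S x /\ x <> a) (b - 1).
Proof.
  intros H Ha l Hl Hin. assert (Z.of_nat (length (a :: l)) <= b).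
  { apply H. constructor; auto. intro h. apply Hin in h. tauto.
    intros x [<-|h]; auto. apply Hin; auto. }
  simpl in H0. lia.
Qed.

Lemma cnt_sigma {A B} (f : A -> B) (c : Z) : 0 <= c -> forall (m : nat) (P : A -> Prop),
  cnt (fun y => exists x, P x /\ f x = y) (Z.of_nat m) ->
  (forall y, cnt (fun x => P x /\ f x = y) c) -> cnt P (Z.of_nat m * c).
Proof.
  intros Hc m. induction m as [|m IH]; intros P Him Hf l Hl Hin.
  - destruct l as [|a l]. simpl; lia.
    exfalso. assert (Hnd : NoDup (f a :: nil)) by (constructor; [intros []|constructor]). specialize (Him (f a :: nil) Hnd).
    simpl in Him. assert (1 <= 0).
    { apply Him. intros y [Hy|[]]. subst y. exists a. split; auto. apply Hin; simpl; auto. }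
    lia.
  - destruct l as [|a l]. { cbn [length Z.of_nat]. apply Z.mul_nonneg_nonneg; lia. }
    set (b := f a).
    destruct (partition_ex (fun x => f x = b) (a :: l) Hl) as [l1 [l2 [N1 [N2 [I1 [I2 E]]]]]].
    rewrite E, Nat2Z.inj_add.
    assert (Z.of_nat (length l1) <= c).
    { apply (Hf b); auto. intros x h. destruct (I1 x h). split; auto. }
    assert (Z.of_nat (length l2) <= Z.of_nat m * c).
    { apply (IH (fun x => P x /\ f x <> b)); auto.
      - intros l' Hl' Hin'.
        assert (Hr := cnt_remove _ _ b Him). 
        assert (Z.of_nat (length l') <= Z.of_nat (S m) - 1).
        { apply Hr. exists a. split; auto. apply Hin; simpl; auto.
          auto. intros y hy. destruct (Hin' y hy) as [x [[h1 h2] h3]]. split.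
          exists x; auto. intro; subst; auto. }
        lia.
      - intros y l' Hl' Hin'. apply (Hf y); auto. intros x hx. destruct (Hin' x hx) as [[h1 h2] h3]; auto.
      - intros x h. destruct (I2 x h). split; auto. }
    lia.
Qed.

Lemma cnt_sigmaZ {A B} (f : A -> B) (m c : Z) (S : A -> Prop) : 0 <= c ->
  cnt (fun y => exists x, S x /\ f x = y) m ->
  (forall y, cnt (fun x => S x /\ f x = y) c) -> cnt S (m * c).
Proof.
  intros Hc Hm Hf. assert (0 <= m) by (eapply cnt_nonneg; eauto).
  replace m with (Z.of_nat (Z.to_nat m)) in * by lia.
  apply (cnt_sigma f); auto.
Qed.

Lemma cnt_Zrange (lo hi : Z) : cnt (fun z => lo <= z <= hi) (Z.max 0 (hi - lo + 1)).
Proof.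
  intros l Hl Hin.
  assert (H: NoDup (map (fun z => Z.to_nat (z - lo)) l)).
  { apply NoDup_map_inj; auto. intros x y hx hy e. apply Hin in hx. apply Hin in hy. lia. }
  apply NoDup_incl_length with (l' := seq 0 (Z.to_nat (hi - lo + 1))) in H.
  - rewrite length_map, length_seq in H. lia.
  - intros n hn. apply in_map_iff in hn. destruct hn as [z [<- hz]]. apply Hin in hz.
    apply in_seq. lia.
Qed.

Lemma cnt_prod {A B} (S1 : A -> Prop) (S2 : B -> Prop) b1 b2 :
  cnt S1 b1 -> cnt S2 b2 -> cnt (fun p => S1 (fst p) /\ S2 (snd p)) (b1 * b2).
Proof.
  intros H1 H2. apply cnt_sigmaZ with (f := @fst A B).
  - eapply cnt_nonneg; eauto.
  - eapply cnt_mono; [|exact H1|lia]. intros y [x [[h _] <-]]; auto.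
  - intro y. apply (cnt_inj _ S2 (@snd A B)); auto.
    + intros [x1 x2] [y1 y2] [_ e1] [_ e2] e. simpl in *. subst. reflexivity.
    + intros x [[_ h] _]; auto.
Qed.

Lemma cnt_pivot {A} (S : A -> Prop) (tau : A -> A -> Z) (q : Z) :
  0 <= q ->
  (forall x0 x, S x0 -> S x -> - q <= tau x0 x <= q) ->
  (forall x0 x y, S x0 -> S x -> S y -> tau x0 x = tau x0 y -> x = y) ->
  cnt S (2 * q + 1).
Proof.
  intros Hq Hb Hi l Hl Hin. destruct l as [|a l]. cbn [length Z.of_nat]; lia.
  apply (cnt_inj S (fun z => -q <= z <= q) (tau a)); auto.
  - intros x y hx hy. apply Hi; auto. apply Hin; simpl; auto.
  - intros x hx. apply Hb; auto. apply Hin; simpl; auto.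
  - eapply cnt_mono; [| apply (cnt_Zrange (-q) q) |]; [auto | lia].
Qed.

Lemma cnt_one {A} (S : A -> Prop) : (forall x y, S x -> S y -> x = y) -> cnt S 1.
Proof.
  intros H. replace 1 with (2*0+1) by lia. apply cnt_pivot with (tau := fun _ _ => 0); auto; lia.
Qed.

Definition det (u v : Z * Z) : Z := fst u * snd v - snd u * fst v.
Definition gcdv (u : Z * Z) : Z := Z.gcd (fst u) (snd u).
Definition prim (u : Z * Z) : Z * Z := (fst u / gcdv u, snd u / gcdv u).

Lemma prim_spec u : u <> (0,0) ->
  0 < gcdv u /\ fst u = gcdv u * fst (prim u) /\ snd u = gcdv u * snd (prim u) /\
  Z.gcd (fst (prim u)) (snd (prim u)) = 1.
Proof.
  destruct u as [u1 u2]. intro Hu. unfold gcdv, prim; simpl.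
  assert (Hg : 0 < Z.gcd u1 u2).
  { assert (0 <= Z.gcd u1 u2) by apply Z.gcd_nonneg.
    destruct (Z.eq_dec (Z.gcd u1 u2) 0) as [h|h]; [|lia]. exfalso.
    apply Z.gcd_eq_0 in h. destruct h; subst; auto. }
  split; auto. split; [|split].
  - unfold gcdv; simpl. apply Z.div_exact; [lia|]. apply Z.mod_divide; [lia|]. apply Z.gcd_divide_l.
  - unfold gcdv; simpl. apply Z.div_exact; [lia|]. apply Z.mod_divide; [lia|]. apply Z.gcd_divide_r.
  - unfold gcdv; simpl. apply Z.gcd_div_gcd; [lia|reflexivity].
Qed.

Lemma prim_nz u : u <> (0,0) -> prim u <> (0,0).
Proof.
  intros Hu He. destruct (prim_spec u Hu) as [_ [h1 [h2 _]]]. rewrite He in h1, h2. simpl in *.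
  destruct u; simpl in *; apply Hu; f_equal; lia.
Qed.

Lemma par_lemma w : Z.gcd (fst w) (snd w) = 1 ->
  exists a b, forall d, fst w * snd d = snd w * fst d ->
    fst d = (a * fst d + b * snd d) * fst w /\ snd d = (a * fst d + b * snd d) * snd w.
Proof.
  intro H. destruct (Z.gcd_bezout _ _ _ H) as [a [b Hab]]. exists a, b.
  intros d Hd. split.
  - assert (E : (a * fst d + b * snd d) * fst w = fst d * (a * fst w + b * snd w) + b * (fst w * snd d - snd w * fst d)) by ring.
    rewrite E, Hab, Hd. ring.
  - assert (E : (a * fst d + b * snd d) * snd w = snd d * (a * fst w + b * snd w) - a * (fst w * snd d - snd w * fst d)) by ring.
    rewrite E, Hab, Hd. ring.
Qed.

Lemma det_prim u v : u <> (0,0) -> det u v = gcdv u * det (prim u) v.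
Proof. intro Hu. destruct (prim_spec u Hu) as [_ [h1 [h2 _]]]. unfold det. rewrite h1, h2 at 1. ring. Qed.

Lemma div_bound (t w X H : Z) : 1 <= X -> X <= Z.abs w -> Z.abs (t * w) <= H - 1 ->
  - ((H - 1) / X) <= t <= (H - 1) / X.
Proof.
  intros h1 h2 h3. rewrite Z.abs_mul in h3.
  assert (Z.abs t <= (H-1)/X). { apply Z.div_le_lower_bound; nia. }
  lia.
Qed.

Definition inb (c h z : Z) : Prop := c <= z < c + h.

Lemma fiber1 (u : Z * Z) (c2 h2 d2 k2 m X : Z) :
  u <> (0,0) -> 1 <= h2 -> 1 <= k2 -> 1 <= X -> X <= Z.abs (fst (prim u)) ->
  cnt (fun v => inb c2 h2 (fst v) /\ inb d2 k2 (snd v) /\ det u v = m) (2 * ((h2 - 1) / X) + 1).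
Proof.
  intros Hu Hh Hk HX HXw. destruct (prim_spec u Hu) as [Hg [e1 [e2 Hp]]].
  destruct (par_lemma _ Hp) as [a [b Hab]].
  assert (Hpar : forall v0 v, det u v0 = m -> det u v = m ->
     fst v - fst v0 = (a * (fst v - fst v0) + b * (snd v - snd v0)) * fst (prim u) /\
     snd v - snd v0 = (a * (fst v - fst v0) + b * (snd v - snd v0)) * snd (prim u)).
  { intros v0 v h0 h. apply (Hab (fst v - fst v0, snd v - snd v0)). cbn [fst snd].
    rewrite det_prim in h0, h by auto. unfold det in h0, h.
    assert (gcdv u * (fst (prim u) * (snd v - snd v0) - snd (prim u) * (fst v - fst v0)) = 0) by nia.
    apply Z.mul_eq_0 in H. destruct H as [H|H]; [lia|]. lia. }
  apply cnt_pivot with (tau := fun v0 v => a * (fst v - fst v0) + b * (snd v - snd v0)).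
  - apply Z.div_pos; lia.
  - intros v0 v [h01 [h02 h03]] [hh1 [hh2 h3]]. destruct (Hpar v0 v h03 h3) as [p1 p2].
    apply div_bound with (w := fst (prim u)); auto. rewrite <- p1. unfold inb in *. lia.
  - intros v0 x y [h01 [h02 h03]] [hh1 [hh2 h3]] [g1 [g2 g3]] E.
    destruct (Hpar v0 x h03 h3) as [p1 p2]. destruct (Hpar v0 y h03 g3) as [q1 q2].
    rewrite E in p1, p2. destruct x, y; simpl in *. f_equal; lia.
Qed.

Lemma fiber2 (u : Z * Z) (c2 h2 d2 k2 m X : Z) :
  u <> (0,0) -> 1 <= h2 -> 1 <= k2 -> 1 <= X -> X <= Z.abs (snd (prim u)) ->
  cnt (fun v => inb c2 h2 (fst v) /\ inb d2 k2 (snd v) /\ det u v = m) (2 * ((k2 - 1) / X) + 1).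
Proof.
  intros Hu Hh Hk HX HXw. destruct (prim_spec u Hu) as [Hg [e1 [e2 Hp]]].
  destruct (par_lemma _ Hp) as [a [b Hab]].
  assert (Hpar : forall v0 v, det u v0 = m -> det u v = m ->
     fst v - fst v0 = (a * (fst v - fst v0) + b * (snd v - snd v0)) * fst (prim u) /\
     snd v - snd v0 = (a * (fst v - fst v0) + b * (snd v - snd v0)) * snd (prim u)).
  { intros v0 v h0 h. apply (Hab (fst v - fst v0, snd v - snd v0)). cbn [fst snd].
    rewrite det_prim in h0, h by auto. unfold det in h0, h.
    assert (gcdv u * (fst (prim u) * (snd v - snd v0) - snd (prim u) * (fst v - fst v0)) = 0) by nia.
    apply Z.mul_eq_0 in H. destruct H; nia. }
  apply cnt_pivot with (tau := fun v0 v => a * (fst v - fst v0) + b * (snd v - snd v0)).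
  - apply Z.div_pos; lia.
  - intros v0 v [h01 [h02 h03]] [hh1 [hh2 h3]]. destruct (Hpar v0 v h03 h3) as [p1 p2].
    apply div_bound with (w := snd (prim u)); auto. rewrite <- p2. unfold inb in *. lia.
  - intros v0 x y [h01 [h02 h03]] [hh1 [hh2 h3]] [g1 [g2 g3]] E.
    destruct (Hpar v0 x h03 h3) as [p1 p2]. destruct (Hpar v0 y h03 g3) as [q1 q2].
    rewrite E in p1, p2. destruct x, y; simpl in *. f_equal; lia.
Qed.

Lemma gfib1 (w : Z * Z) (c1 h1 d1 k1 X : Z) :
  1 <= h1 -> 1 <= k1 -> 1 <= X -> X <= Z.abs (fst w) ->
  cnt (fun u => (inb c1 h1 (fst u) /\ inb d1 k1 (snd u) /\ u <> (0,0)) /\ prim u = w)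
    (2 * ((h1 - 1) / X) + 1).
Proof.
  intros Hh Hk HX HXw.
  apply cnt_pivot with (tau := fun u0 u => gcdv u - gcdv u0).
  - apply Z.div_pos; lia.
  - intros u0 u [[h01 [h02 h03]] h04] [[hh1 [hh2 h3]] h4].
    destruct (prim_spec u h3) as [_ [e1 _]]. destruct (prim_spec u0 h03) as [_ [f1 _]].
    rewrite h4 in e1. rewrite h04 in f1.
    apply div_bound with (w := fst w); auto. unfold inb in *. 
    replace ((gcdv u - gcdv u0) * fst w) with (fst u - fst u0) by lia. lia.
  - intros u0 x y _ [[_ [_ h3]] h4] [[_ [_ g3]] g4] E.
    destruct (prim_spec x h3) as [_ [e1 [e2 _]]]. destruct (prim_spec y g3) as [_ [f1 [f2 _]]].
    assert (gcdv x = gcdv y) by lia. rewrite h4 in e1, e2. rewrite g4 in f1, f2.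
    destruct x, y; simpl in *; f_equal; congruence.
Qed.

Lemma gfib2 (w : Z * Z) (c1 h1 d1 k1 X : Z) :
  1 <= h1 -> 1 <= k1 -> 1 <= X -> X <= Z.abs (snd w) ->
  cnt (fun u => (inb c1 h1 (fst u) /\ inb d1 k1 (snd u) /\ u <> (0,0)) /\ prim u = w)
    (2 * ((k1 - 1) / X) + 1).
Proof.
  intros Hh Hk HX HXw.
  apply cnt_pivot with (tau := fun u0 u => gcdv u - gcdv u0).
  - apply Z.div_pos; lia.
  - intros u0 u [[h01 [h02 h03]] h04] [[hh1 [hh2 h3]] h4].
    destruct (prim_spec u h3) as [_ [_ [e1 _]]]. destruct (prim_spec u0 h03) as [_ [_ [f1 _]]].
    rewrite h4 in e1. rewrite h04 in f1.
    apply div_bound with (w := snd w); auto. unfold inb in *. 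
    replace ((gcdv u - gcdv u0) * snd w) with (snd u - snd u0) by lia. lia.
  - intros u0 x y _ [[_ [_ h3]] h4] [[_ [_ g3]] g4] E.
    destruct (prim_spec x h3) as [_ [e1 [e2 _]]]. destruct (prim_spec y g3) as [_ [f1 [f2 _]]].
    assert (gcdv x = gcdv y) by lia. rewrite h4 in e1, e2. rewrite g4 in f1, f2.
    destruct x, y; simpl in *; f_equal; congruence.
Qed.

Definition lv (a : Z) : Z := if a =? 0 then 0 else Z.log2 a + 1.

Lemma lv_spec a : 0 <= a -> 0 <= lv a /\ (lv a = 0 -> a = 0) /\ a < 2 ^ lv a /\
  (1 <= lv a -> 2 ^ (lv a - 1) <= a).
Proof.
  intro Ha. unfold lv. destruct (Z.eqb_spec a 0) as [->|h].
  - simpl. lia.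
  - assert (Hl := Z.log2_nonneg a). destruct (Z.log2_spec a ltac:(lia)) as [l1 l2].
    split; [lia|]. split; [lia|]. split.
    + rewrite Z.add_1_r; auto.
    + intros _. replace (Z.log2 a + 1 - 1) with (Z.log2 a) by lia. auto.
Qed.

Lemma cnt_min {T} (S : T -> Prop) a b : cnt S a -> cnt S b -> cnt S (Z.min a b).
Proof. intros Ha Hb l Hl Hi. specialize (Ha l Hl Hi). specialize (Hb l Hl Hi). lia. Qed.

Lemma cnt_empty {T} (S : T -> Prop) b : 0 <= b -> (forall x, ~ S x) -> cnt S b.
Proof. intros Hb H l Hl Hi. destruct l as [|a l]. cbn [length Z.of_nat]; lia. exfalso. apply (H a), Hi. simpl; auto. Qed.

Lemma cnt_box (c h d k : Z) : 1 <= h -> 1 <= k ->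
  cnt (fun u : Z * Z => inb c h (fst u) /\ inb d k (snd u)) (h * k).
Proof.
  intros Hh Hk. eapply cnt_mono; [| apply (cnt_prod _ _ _ _ (cnt_Zrange c (c + h - 1)) (cnt_Zrange d (d + k - 1)))|].
  - intros x [h1 h2]. unfold inb in *. split; lia.
  - lia.
Qed.

Lemma pow_mono_le (a b : Z) : 0 <= a <= b -> 2 ^ a <= 2 ^ b.
Proof. intros. apply Z.pow_le_mono_r; lia. Qed.

Definition Wd (l1 l2 : Z) := (2 * 2 ^ l1 - 1) * (2 * 2 ^ l2 - 1).

Lemma pow_pos1 l : 0 <= l -> 1 <= 2 ^ l.
Proof. intro. assert (0 < 2 ^ l) by (apply Z.pow_pos_nonneg; lia). lia. Qed.

Section Core.
Variables (c1 h1 d1 k1 c2 h2 d2 k2 m K1 K2 M : Z).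

Definition box1 (u : Z * Z) := inb c1 h1 (fst u) /\ inb d1 k1 (snd u).
Definition box2 (v : Z * Z) := inb c2 h2 (fst v) /\ inb d2 k2 (snd v).
Definition Spair (p : (Z * Z) * (Z * Z)) :=
  (box1 (fst p) /\ fst p <> (0,0)) /\ box2 (snd p) /\ det (fst p) (snd p) = m.

Definition cls (p : (Z * Z) * (Z * Z)) : Z * Z :=
  (Z.min (lv (Z.abs (fst (prim (fst p))))) K1, Z.min (lv (Z.abs (snd (prim (fst p))))) K2).

Definition valG l1 l2 G :=
  (1 <= l1 /\ G = 2 * ((h1 - 1) / 2 ^ (l1 - 1)) + 1) \/ (1 <= l2 /\ G = 2 * ((k1 - 1) / 2 ^ (l2 - 1)) + 1).
Definition valF l1 l2 F :=
  (1 <= l1 /\ F = 2 * ((h2 - 1) / 2 ^ (l1 - 1)) + 1) \/ (1 <= l2 /\ F = 2 * ((k2 - 1) / 2 ^ (l2 - 1)) + 1).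

Hypotheses (Hh1 : 1 <= h1) (Hk1 : 1 <= k1) (Hh2 : 1 <= h2) (Hk2 : 1 <= k2)
  (HK1 : 1 <= K1) (HK2 : 1 <= K2) (HKh : h2 <= 2 ^ (K1 - 1)) (HKk : k2 <= 2 ^ (K2 - 1))
  (HM : h1 * k1 <= M)
  (Hbound : forall l1 l2, 0 <= l1 < K1 -> 0 <= l2 < K2 -> (1 <= l1 \/ 1 <= l2) ->
     exists G F, valG l1 l2 G /\ valF l1 l2 F /\ Z.min (h1 * k1) (Wd l1 l2 * G) * F <= M).

Lemma fiber_u (y : Z * Z) (P : (Z*Z)*(Z*Z) -> Prop) (u : Z * Z) (b : Z) :
  (forall p, P p -> Spair p) ->
  cnt (fun v => box2 v /\ det u v = m) b ->
  cnt (fun p => P p /\ fst p = u) b.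
Proof.
  intros HP Hc. apply (cnt_inj _ (fun v => box2 v /\ det u v = m) (@snd (Z*Z) (Z*Z)) b); auto.
  - intros [x1 x2] [y1 y2] [_ e1] [_ e2] e. simpl in *. subst. auto.
  - intros p [hp <-]. destruct (HP p hp) as [_ [h1' h2']]. auto.
Qed.

Lemma via_u (P : (Z*Z)*(Z*Z) -> Prop) (U : Z * Z -> Prop) a b :
  0 <= b -> (forall p, P p -> Spair p) -> (forall p, P p -> U (fst p)) -> cnt U a ->
  (forall u, (exists p, P p /\ fst p = u) -> cnt (fun v => box2 v /\ det u v = m) b) ->
  cnt P (a * b).
Proof.
  intros Hb HP HU Ha Hf. apply cnt_sigmaZ with (f := @fst (Z*Z) (Z*Z)); auto.
  - eapply cnt_mono; [|exact Ha|lia]. intros u [p [hp <-]]. auto.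
  - intro u. destruct (classic (exists p, P p /\ fst p = u)) as [e|e].
    + eapply fiber_u; eauto.
    + apply cnt_empty; auto. intros p hp. apply e. exists p. auto.
Qed.

Lemma abs_prim_lv1 (u : Z * Z) l : Z.min (lv (Z.abs (fst (prim u)))) K1 = l -> K1 <= l ->
  2 ^ (K1 - 1) <= Z.abs (fst (prim u)).
Proof.
  intros e hl. destruct (lv_spec (Z.abs (fst (prim u))) ltac:(lia)) as [a1 [a2 [a3 a4]]].
  assert (K1 <= lv (Z.abs (fst (prim u)))) by lia.
  eapply Z.le_trans; [|apply a4; lia]. apply pow_mono_le; lia.
Qed.

Lemma abs_prim_lv2 (u : Z * Z) l : Z.min (lv (Z.abs (snd (prim u)))) K2 = l -> K2 <= l ->
  2 ^ (K2 - 1) <= Z.abs (snd (prim u)).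
Proof.
  intros e hl. destruct (lv_spec (Z.abs (snd (prim u))) ltac:(lia)) as [a1 [a2 [a3 a4]]].
  assert (K2 <= lv (Z.abs (snd (prim u)))) by lia.
  eapply Z.le_trans; [|apply a4; lia]. apply pow_mono_le; lia.
Qed.


Lemma class_bound (y : Z * Z) : cnt (fun p => Spair p /\ cls p = y) M.
Proof.
  assert (HM0 : 0 <= M) by nia.
  destruct y as [l1 l2].
  destruct (Z_lt_le_dec l1 K1) as [L1|L1].
  2:{ eapply cnt_mono; [intros p hp; exact hp| | ].
      apply (via_u _ box1 (h1 * k1) 1); [lia|tauto| |apply cnt_box; auto|].
      - intros p [[[h _] _] _]. auto.
      - intros u [p [[hp hc] <-]]. assert (hc1 := f_equal fst hc); assert (hc2 := f_equal snd hc); unfold cls in hc1, hc2; cbn [fst snd] in hc1, hc2.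
        destruct hp as [[_ hz] _].
        replace 1 with (2 * ((h2 - 1) / 2 ^ (K1 - 1)) + 1).
        + eapply cnt_mono; [intros v [[va vb] vc]; exact (conj va (conj vb vc)) | apply fiber1 | apply Z.le_refl]; auto.
          * apply pow_pos1; lia.
          * eapply abs_prim_lv1; eauto.
        + rewrite Z.div_small; lia.
      - lia. }
  destruct (Z_lt_le_dec l2 K2) as [L2|L2].
  2:{ eapply cnt_mono; [intros p hp; exact hp| | ].
      apply (via_u _ box1 (h1 * k1) 1); [lia|tauto| |apply cnt_box; auto|].
      - intros p [[[h _] _] _]. auto.
      - intros u [p [[hp hc] <-]]. assert (hc1 := f_equal fst hc); assert (hc2 := f_equal snd hc); unfold cls in hc1, hc2; cbn [fst snd] in hc1, hc2.
        destruct hp as [[_ hz] _].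
        replace 1 with (2 * ((k2 - 1) / 2 ^ (K2 - 1)) + 1).
        + eapply cnt_mono; [intros v [[va vb] vc]; exact (conj va (conj vb vc)) | apply fiber2 | apply Z.le_refl]; auto.
          * apply pow_pos1; lia.
          * eapply abs_prim_lv2; eauto.
        + rewrite Z.div_small; lia.
      - lia. }
  destruct (classic (l1 = 0 /\ l2 = 0)) as [[E1 E2]|Hne].
  { apply cnt_empty; auto. intros p [[[_ hz] _] hc]. assert (hc1 := f_equal fst hc); assert (hc2 := f_equal snd hc); unfold cls in hc1, hc2; cbn [fst snd] in hc1, hc2.
    apply (prim_nz _ hz).
    destruct (lv_spec (Z.abs (fst (prim (fst p)))) ltac:(lia)) as [a1 [a2 _]].
    destruct (lv_spec (Z.abs (snd (prim (fst p)))) ltac:(lia)) as [b1 [b2 _]].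
    assert (Z.abs (fst (prim (fst p))) = 0) by (apply a2; lia).
    assert (Z.abs (snd (prim (fst p))) = 0) by (apply b2; lia).
    destruct (prim (fst p)); simpl in *; f_equal; lia. }
  destruct (classic (0 <= l1 /\ 0 <= l2)) as [[Hl1 Hl2]|Hneg].
  2:{ apply cnt_empty; auto. intros p [_ hc].
      assert (hc1 := f_equal fst hc); assert (hc2 := f_equal snd hc); unfold cls in hc1, hc2; cbn [fst snd] in hc1, hc2.
      destruct (lv_spec (Z.abs (fst (prim (fst p)))) ltac:(lia)) as [a1 _].
      destruct (lv_spec (Z.abs (snd (prim (fst p)))) ltac:(lia)) as [b1 _]. lia. }
  destruct (Hbound l1 l2 ltac:(lia) ltac:(lia) ltac:(lia)) as [G [F [HG [HF HGF]]]].
  assert (HG0 : 0 <= G).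
  { destruct HG as [[g ->]|[g ->]].
    - assert (0 <= (h1 - 1) / 2 ^ (l1 - 1)) by (apply Z.div_pos; [lia|apply Z.pow_pos_nonneg; lia]). lia.
    - assert (0 <= (k1 - 1) / 2 ^ (l2 - 1)) by (apply Z.div_pos; [lia|apply Z.pow_pos_nonneg; lia]). lia. }
  assert (HF0 : 0 <= F).
  { destruct HF as [[g ->]|[g ->]].
    - assert (0 <= (h2 - 1) / 2 ^ (l1 - 1)) by (apply Z.div_pos; [lia|apply Z.pow_pos_nonneg; lia]). lia.
    - assert (0 <= (k2 - 1) / 2 ^ (l2 - 1)) by (apply Z.div_pos; [lia|apply Z.pow_pos_nonneg; lia]). lia. }
  set (U := fun u : Z * Z => (box1 u /\ u <> (0,0)) /\ lv (Z.abs (fst (prim u))) = l1 /\ lv (Z.abs (snd (prim u))) = l2).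
  eapply cnt_mono; [intros p hp; exact hp| |exact HGF].
  apply (via_u _ U); auto.
  - tauto.
  - intros p [hp hc]. assert (hc1 := f_equal fst hc); assert (hc2 := f_equal snd hc); unfold cls in hc1, hc2; cbn [fst snd] in hc1, hc2.
    unfold U. destruct hp as [hp _]. split; auto. split; lia.
  - apply cnt_min.
    + eapply cnt_mono; [|apply (cnt_box c1 h1 d1 k1); auto|lia]. intros u [[h _] _]; exact h.
    + apply cnt_sigmaZ with (f := prim); auto.
      * eapply cnt_mono; [|apply (cnt_box (- (2 ^ l1 - 1)) (2 * 2 ^ l1 - 1) (- (2 ^ l2 - 1)) (2 * 2 ^ l2 - 1))|unfold Wd; lia].
        -- intros w [u [[_ [e1 e2]] <-]]. 
           destruct (lv_spec (Z.abs (fst (prim u))) ltac:(lia)) as [_ [_ [a3 _]]].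
           destruct (lv_spec (Z.abs (snd (prim u))) ltac:(lia)) as [_ [_ [b3 _]]].
           rewrite e1 in a3. rewrite e2 in b3. unfold inb. lia.
        -- assert (1 <= 2 ^ l1) by (apply pow_pos1; lia). lia.
        -- assert (1 <= 2 ^ l2) by (apply pow_pos1; lia). lia.
      * intro w. destruct (classic (exists u, U u /\ prim u = w)) as [[u0 [[_ [e1 e2]] <-]]|ne].
        2:{ apply cnt_empty; auto. intros u hu. apply ne. exists u. auto. }
        destruct (lv_spec (Z.abs (fst (prim u0))) ltac:(lia)) as [_ [_ [_ a4]]].
        destruct (lv_spec (Z.abs (snd (prim u0))) ltac:(lia)) as [_ [_ [_ b4]]].
        rewrite e1 in a4. rewrite e2 in b4.
        destruct HG as [[g1 ->]|[g1 ->]].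
        -- eapply cnt_mono; [| apply (gfib1 (prim u0) c1 h1 d1 k1 (2 ^ (l1 - 1))) | apply Z.le_refl]; auto.
           ++ intros u [[[hu1 hu2] _] hu3]. destruct hu1 as [i1 i3]. split; [split; [|split]|]; auto.
           ++ apply pow_pos1; lia.
        -- eapply cnt_mono; [| apply (gfib2 (prim u0) c1 h1 d1 k1 (2 ^ (l2 - 1))) | apply Z.le_refl]; auto.
           ++ intros u [[[hu1 hu2] _] hu3]. destruct hu1 as [i1 i3]. split; [split; [|split]|]; auto.
           ++ apply pow_pos1; lia.
  - intros u [p [[hp hc] <-]].
    assert (hc1 := f_equal fst hc); assert (hc2 := f_equal snd hc); unfold cls in hc1, hc2; cbn [fst snd] in hc1, hc2.
    destruct hp as [[_ hz] _].
    assert (e1 : lv (Z.abs (fst (prim (fst p)))) = l1) by lia.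
    assert (e2 : lv (Z.abs (snd (prim (fst p)))) = l2) by lia.
    destruct (lv_spec (Z.abs (fst (prim (fst p)))) ltac:(lia)) as [_ [_ [_ a4]]].
    destruct (lv_spec (Z.abs (snd (prim (fst p)))) ltac:(lia)) as [_ [_ [_ b4]]].
    rewrite e1 in a4. rewrite e2 in b4.
    destruct HF as [[g1 ->]|[g1 ->]].
    + eapply cnt_mono; [intros v [[va vb] vc]; exact (conj va (conj vb vc)) | apply fiber1 | apply Z.le_refl]; auto.
      apply pow_pos1; lia.
    + eapply cnt_mono; [intros v [[va vb] vc]; exact (conj va (conj vb vc)) | apply fiber2 | apply Z.le_refl]; auto.
      apply pow_pos1; lia.
Qed.
Lemma core_count : cnt Spair ((K1 + 1) * (K2 + 1) * M).
Proof.
  apply cnt_sigmaZ with (f := cls).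
  - nia.
  - eapply cnt_mono; [| apply (cnt_box 0 (K1 + 1) 0 (K2 + 1)); lia | lia].
    intros y [p [_ <-]]. unfold cls, inb; cbn [fst snd].
    destruct (lv_spec (Z.abs (fst (prim (fst p)))) ltac:(lia)) as [a1 _].
    destruct (lv_spec (Z.abs (snd (prim (fst p)))) ltac:(lia)) as [b1 _]. lia.
  - apply class_bound.
Qed.

End Core.

Lemma divfacts (a X : Z) : 0 <= a -> 0 < X -> 0 <= a / X /\ X * (a / X) <= a /\ (a < X -> a / X = 0).
Proof.
  intros. split; [apply Z.div_pos; lia|]. split; [apply Z.mul_div_le; lia|]. intro; apply Z.div_small; lia.
Qed.

Lemma arithA (A B X W q r : Z) : 1 <= A <= B -> 1 <= X -> 0 <= q -> 0 <= r ->
  X * q <= A - 1 -> X * r <= B - 1 -> (A - 1 < X -> q = 0) -> 0 <= W <= 16 * X * X ->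
  Z.min (A * A) (W * (2 * q + 1)) * (2 * r + 1) <= 144 * A * B.
Proof.
  intros HA HX Hq Hr Hxq Hxr Hq0 HW.
  destruct (Z_le_gt_dec X A) as [h|h].
  - assert (E1 : X * (2 * q + 1) <= 3 * A) by lia.
    assert (E2 : X * (2 * r + 1) <= 3 * B) by lia.
    assert (Z.min (A * A) (W * (2 * q + 1)) <= W * (2 * q + 1)) by lia.
    assert (W * (2 * q + 1) * (2 * r + 1) <= 16 * (X * (2 * q + 1)) * (X * (2 * r + 1))) by nia.
    assert (16 * (X * (2 * q + 1)) * (X * (2 * r + 1)) <= 16 * (3 * A) * (3 * B)) by nia.
    nia.
  - rewrite Hq0 by lia.
    assert (Z.min (A * A) (W * (2 * 0 + 1)) <= A * A) by lia.
    assert (A * r <= X * r) by nia. nia.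
Qed.

Lemma pow_pred l : 1 <= l -> 2 ^ l = 2 * 2 ^ (l - 1).
Proof. intro. rewrite <- Z.pow_succ_r by lia. f_equal. lia. Qed.

Lemma HboundA (A B l1 l2 : Z) : 1 <= A <= B -> 0 <= l1 -> 0 <= l2 -> (1 <= l1 \/ 1 <= l2) ->
  exists G F, valG A A l1 l2 G /\ valF B B l1 l2 F /\
    Z.min (A * A) (Wd l1 l2 * G) * F <= 144 * A * B.
Proof.
  intros HA H1 H2 H12. unfold valG, valF.
  assert (P1 : 0 < 2 ^ l1) by (apply Z.pow_pos_nonneg; lia).
  assert (P2 : 0 < 2 ^ l2) by (apply Z.pow_pos_nonneg; lia).
  destruct (Z_le_gt_dec l2 l1) as [h|h].
  - assert (L : 1 <= l1) by lia. set (X := 2 ^ (l1 - 1)).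
    assert (HX : 2 ^ l1 = 2 * X) by (apply pow_pred; lia).
    assert (HX1 : 1 <= X) by (unfold X; apply pow_pos1; lia).
    assert (Hle : 2 ^ l2 <= 2 ^ l1) by (apply pow_mono_le; lia).
    exists (2 * ((A - 1) / X) + 1), (2 * ((B - 1) / X) + 1).
    split; [left; auto|]. split; [left; auto|].
    destruct (divfacts (A - 1) X ltac:(lia) ltac:(lia)) as [a1 [a2 a3]].
    destruct (divfacts (B - 1) X ltac:(lia) ltac:(lia)) as [b1 [b2 b3]].
    apply arithA with (X := X); auto; try lia.
    unfold Wd. split; nia.
  - assert (L : 1 <= l2) by lia. set (X := 2 ^ (l2 - 1)).
    assert (HX : 2 ^ l2 = 2 * X) by (apply pow_pred; lia).
    assert (HX1 : 1 <= X) by (unfold X; apply pow_pos1; lia).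
    assert (Hle : 2 ^ l1 <= 2 ^ l2) by (apply pow_mono_le; lia).
    exists (2 * ((A - 1) / X) + 1), (2 * ((B - 1) / X) + 1).
    split; [right; auto|]. split; [right; auto|].
    destruct (divfacts (A - 1) X ltac:(lia) ltac:(lia)) as [a1 [a2 a3]].
    destruct (divfacts (B - 1) X ltac:(lia) ltac:(lia)) as [b1 [b2 b3]].
    apply arithA with (X := X); auto; try lia.
    unfold Wd. split; nia.
Qed.


Lemma mulh (W K a b : Z) : 0 <= W <= K -> 0 <= a -> 0 <= b -> W * a * b <= K * a * b.
Proof. intros. apply Z.mul_le_mono_nonneg_r; auto. apply Z.mul_le_mono_nonneg_r; lia. Qed.

Lemma arithR1 (P S X W q r : Z) : 1 <= S <= P -> 1 <= X -> 0 <= q -> 0 <= r ->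
  X * q <= P - 1 -> X * r <= S - 1 -> (S - 1 < X -> r = 0) -> 0 <= W <= 16 * X * X ->
  Z.min (P * S) (W * (2 * q + 1)) * (2 * r + 1) <= 144 * P * S.
Proof.
  intros HA HX Hq Hr Hxq Hxr Hr0 HW.
  destruct (Z_le_gt_dec X S) as [h|h].
  - assert (E1 : X * (2 * q + 1) <= 3 * P) by lia.
    assert (E2 : X * (2 * r + 1) <= 3 * S) by lia.
    assert (Z.min (P * S) (W * (2 * q + 1)) <= W * (2 * q + 1)) by lia.
    assert (W * (2 * q + 1) * (2 * r + 1) <= 16 * (X * (2 * q + 1)) * (X * (2 * r + 1))) by (timeout 15 nia).
    assert (16 * (X * (2 * q + 1)) * (X * (2 * r + 1)) <= 16 * (3 * P) * (3 * S)) by (timeout 15 nia).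
    timeout 15 nia.
  - rewrite Hr0 by lia. timeout 15 nia.
Qed.

Lemma HboundR (P S l1 l2 : Z) : 1 <= S <= P -> 0 <= l1 -> 0 <= l2 -> (1 <= l1 \/ 1 <= l2) ->
  exists G F, valG P S l1 l2 G /\ valF S P l1 l2 F /\
    Z.min (P * S) (Wd l1 l2 * G) * F <= 144 * P * S.
Proof.
  intros HA H1 H2 H12. unfold valG, valF.
  assert (P1 : 0 < 2 ^ l1) by (apply Z.pow_pos_nonneg; lia).
  assert (P2 : 0 < 2 ^ l2) by (apply Z.pow_pos_nonneg; lia).
  destruct (Z_le_gt_dec l2 l1) as [h|h].
  - assert (L : 1 <= l1) by lia. set (X := 2 ^ (l1 - 1)).
    assert (HX : 2 ^ l1 = 2 * X) by (apply pow_pred; lia).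
    assert (HX1 : 1 <= X) by (unfold X; apply pow_pos1; lia).
    assert (Hle : 2 ^ l2 <= 2 ^ l1) by (apply pow_mono_le; lia).
    exists (2 * ((P - 1) / X) + 1), (2 * ((S - 1) / X) + 1).
    split; [left; auto|]. split; [left; auto|].
    destruct (divfacts (P - 1) X ltac:(lia) ltac:(lia)) as [a1 [a2 a3]].
    destruct (divfacts (S - 1) X ltac:(lia) ltac:(lia)) as [b1 [b2 b3]].
    apply arithR1 with (X := X); auto; try lia.
    unfold Wd. split; timeout 15 nia.
  - assert (L : 1 <= l2) by lia. set (Y := 2 ^ (l2 - 1)).
    assert (HY : 2 ^ l2 = 2 * Y) by (apply pow_pred; lia).
    assert (HY1 : 1 <= Y) by (unfold Y; apply pow_pos1; lia).
    assert (Hle : 2 ^ l1 <= Y) by (apply pow_mono_le; lia).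
    set (Zl := 2 ^ l1).
    assert (HW : 0 <= Wd l1 l2 <= 8 * Zl * Y) by (unfold Wd; fold Zl; split; timeout 15 nia).
    destruct (divfacts (S - 1) Y ltac:(lia) ltac:(lia)) as [a1 [a2 a3]].
    destruct (divfacts (P - 1) Y ltac:(lia) ltac:(lia)) as [b1 [b2 b3]].
    destruct (Z_le_gt_dec Y S) as [hy|hy].
    + exists (2 * ((S - 1) / Y) + 1), (2 * ((P - 1) / Y) + 1).
      split; [right; auto|]. split; [right; auto|].
      set (q := (S - 1) / Y) in *. set (r := (P - 1) / Y) in *.
      assert (E1 : Y * (2 * q + 1) <= 3 * S) by lia.
      assert (E2 : Y * (2 * r + 1) <= 3 * P) by lia.
      assert (Z.min (P * S) (Wd l1 l2 * (2 * q + 1)) <= Wd l1 l2 * (2 * q + 1)) by lia.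
      assert (HW2 : 0 <= Wd l1 l2 <= 8 * Y * Y) by (split; [lia|]; timeout 15 nia).
      assert (Wd l1 l2 * (2 * q + 1) * (2 * r + 1) <= 8 * (Y * (2 * q + 1)) * (Y * (2 * r + 1))).
      { replace (8 * (Y * (2 * q + 1)) * (Y * (2 * r + 1))) with (8 * Y * Y * (2 * q + 1) * (2 * r + 1)) by ring.
        apply mulh; lia. }
      assert (8 * (Y * (2 * q + 1)) * (Y * (2 * r + 1)) <= 8 * (3 * S) * (3 * P)) by (timeout 15 nia).
      timeout 15 nia.
    + assert (Hq : (S - 1) / Y = 0) by (apply a3; lia).
      destruct (classic (1 <= l1 /\ S <= 2 ^ (l1 - 1))) as [[L1 HS]|HS].
      * set (X := 2 ^ (l1 - 1)) in *.
        assert (HX1 : 1 <= X) by (unfold X; apply pow_pos1; lia).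
        exists (2 * ((S - 1) / Y) + 1), (2 * ((S - 1) / X) + 1).
        split; [right; auto|]. split; [left; auto|].
        rewrite Z.div_small with (a := S - 1) (b := X) by lia. timeout 15 nia.
      * assert (HZ : Zl <= 2 * S).
        { destruct (Z_le_gt_dec 1 l1) as [L1|L1].
          - unfold Zl. rewrite pow_pred by lia.
            assert (2 ^ (l1 - 1) < S) by (destruct (Z_lt_le_dec (2 ^ (l1 - 1)) S); [auto| exfalso; apply HS; auto]). lia.
          - unfold Zl. assert (l1 = 0) by lia. subst l1. lia. }
        exists (2 * ((S - 1) / Y) + 1), (2 * ((P - 1) / Y) + 1).
        split; [right; auto|]. split; [right; auto|].
        rewrite Hq. set (r := (P - 1) / Y) in *.
        destruct (Z_le_gt_dec Y P) as [hyp|hyp].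
        2:{ rewrite b3 by lia. lia. }
        assert (E2 : Y * (2 * r + 1) <= 3 * P) by lia.
        assert (Z.min (P * S) (Wd l1 l2 * (2 * 0 + 1)) <= Wd l1 l2) by lia.
        assert (Wd l1 l2 * (2 * r + 1) <= 8 * Zl * (Y * (2 * r + 1))).
        { replace (8 * Zl * (Y * (2 * r + 1))) with (8 * Zl * Y * (2 * r + 1)) by ring.
          apply Z.mul_le_mono_nonneg_r; lia. }
        assert (8 * Zl * (Y * (2 * r + 1)) <= 8 * (2 * S) * (3 * P)).
        { apply Z.mul_le_mono_nonneg; try lia. }
        assert (0 <= r) by lia.
        assert (Z.min (P * S) (Wd l1 l2 * (2 * 0 + 1)) * (2 * r + 1) <= Wd l1 l2 * (2 * r + 1)).
        { apply Z.mul_le_mono_nonneg_r; lia. }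
        lia.
Qed.

Lemma sq_bound a M : 0 <= M -> a * a < M * M -> - (M - 1) <= a <= M - 1.
Proof.
  intros HM H. destruct (Z_le_gt_dec M a) as [h|h].
  - assert (M * M <= a * a) by (apply Z.mul_le_mono_nonneg; lia). lia.
  - destruct (Z_le_gt_dec a (- M)) as [h'|h'].
    + assert (M * M <= (-a) * (-a)) by (apply Z.mul_le_mono_nonneg; lia). lia.
    + lia.
Qed.

Lemma dsim_box (m : Z2) (k : nat) : dsim m (2 ^ Z.of_nat k) ->
  - (2 * 2 ^ Z.of_nat k - 1) <= fst m <= 2 * 2 ^ Z.of_nat k - 1 /\
  - (2 * 2 ^ Z.of_nat k - 1) <= snd m <= 2 * 2 ^ Z.of_nat k - 1.
Proof.
  unfold dsim, eucl2. set (N := 2 ^ Z.of_nat k).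
  assert (HN : 1 <= N) by (apply pow_pos1; lia).
  destruct (Z.eqb_spec N 1) as [e|e].
  - rewrite e. intro H. destruct m as [a b]; cbn [fst snd] in *. assert (0 <= b * b) by nia. assert (0 <= a * a) by nia.
    split; [apply (sq_bound a 2)|apply (sq_bound b 2)]; lia.
  - intros [_ H]. destruct m as [a b]; cbn [fst snd] in *. assert (0 <= b * b) by nia. assert (0 <= a * a) by nia.
    split; [apply (sq_bound a (2 * N))|apply (sq_bound b (2 * N))]; nia.
Qed.

Lemma gamma_facts mu n t : Gamma_minus mu n t ->
  t2 t = (fst (t1 t) + fst (t3 t) - fst n, snd (t1 t) + snd (t3 t) - snd n) /\
  t1 t <> n /\ t3 t <> n /\
  mu = 2 * ((fst (t1 t) - fst n) * (fst (t3 t) - fst n) - (snd (t1 t) - snd n) * (snd (t3 t) - snd n)).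
Proof.
  destruct t as [[n1 n2] n3]. unfold Gamma_minus, Gamma, t1, t2, t3. cbn [fst snd].
  intros [[He [H1 H3]] Hmu].
  destruct n as [a b], n1 as [a1 b1], n2 as [a2 b2], n3 as [a3 b3].
  unfold add2, sub2, hypmod2 in *; cbn [fst snd] in *. injection He as e1 e2.
  assert (a2 = a1 + a3 - a) by lia. assert (b2 = b1 + b3 - b) by lia. subst a2 b2.
  split; [reflexivity|]. split; [intro h; apply H1; auto|]. split; [intro h; apply H3; auto|].
  rewrite <- Hmu. ring.
Qed.

Lemma peq (p q : Z2) : fst p = fst q -> snd p = snd q -> p = q.
Proof. destruct p, q; cbn; intros; subst; auto. Qed.

Definition NN (k : nat) : Z := 2 ^ Z.of_nat k.

Lemma NN_ge1 k : 1 <= NN k.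
Proof. unfold NN. apply pow_pos1; lia. Qed.

Lemma NN_mono k k' : (k <= k')%nat -> NN k <= NN k'.
Proof. intro. unfold NN. apply pow_mono_le; lia. Qed.

Lemma NN_shift k j : 0 <= j -> 2 ^ (Z.of_nat k + j) = NN k * 2 ^ j.
Proof. intro. unfold NN. rewrite Z.pow_add_r; lia. Qed.

Lemma sq_count (cx dx cy dy m : Z) (kA kB : nat) : (kA <= kB)%nat ->
  cnt (Spair cx (4 * NN kA) dx (4 * NN kA) cy (4 * NN kB) dy (4 * NN kB) m)
    ((Z.of_nat kB + 4) * (Z.of_nat kB + 4) * (144 * (4 * NN kA) * (4 * NN kB))).
Proof.
  intro Hk. assert (HA := NN_ge1 kA). assert (HB := NN_ge1 kB). assert (HAB := NN_mono _ _ Hk).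
  replace (Z.of_nat kB + 4) with (Z.of_nat kB + 3 + 1) by lia.
  apply core_count; try lia.
  - replace (Z.of_nat kB + 3 - 1) with (Z.of_nat kB + 2) by lia. rewrite NN_shift by lia. change (2 ^ 2) with 4. lia.
  - replace (Z.of_nat kB + 3 - 1) with (Z.of_nat kB + 2) by lia. rewrite NN_shift by lia. change (2 ^ 2) with 4. lia.
  - nia.
  - intros l1 l2 H1 H2 H12. apply HboundA; lia.
Qed.

Definition Sx (n : Z2) (k : nat) (z : Z2) :=
  inb (- fst n - (2 * NN k - 1)) (4 * NN k) (fst z) /\ inb (- snd n - (2 * NN k - 1)) (4 * NN k) (snd z).

Lemma box_shift (n : Z2) (k : nat) (m : Z2) : dsim m (NN k) ->
  inb (- fst n - (2 * NN k - 1)) (4 * NN k) (fst m - fst n) /\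
  inb (- snd n - (2 * NN k - 1)) (4 * NN k) (snd m - snd n).
Proof. intro H. apply dsim_box in H. unfold inb, NN in *. lia. Qed.

Lemma bound1 (n : Z2) (mu : Z) (k1 k3 : nat) :
  cnt (fun t => Gamma_minus mu n t /\ dsim (t1 t) (NN k1) /\ dsim (t3 t) (NN k3))
    ((Z.of_nat (Nat.max k1 k3) + 4) * (Z.of_nat (Nat.max k1 k3) + 4) * (2304 * NN k1 * NN k3)).
Proof.
  assert (Hinj : forall t t', Gamma_minus mu n t -> Gamma_minus mu n t' -> t1 t = t1 t' -> t3 t = t3 t' -> t = t').
  { intros t t' h h' e1 e3. destruct (gamma_facts _ _ _ h) as [f2 _]. destruct (gamma_facts _ _ _ h') as [g2 _].
    rewrite e1, e3 in f2. rewrite <- g2 in f2. destruct t as [[a b] c], t' as [[a' b'] c'].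
    unfold t1, t2, t3 in *; cbn [fst snd] in *. subst. reflexivity. }
  destruct (le_lt_dec k1 k3) as [Hk|Hk].
  - rewrite Nat.max_r by lia.
    eapply cnt_mono; [| apply (cnt_inj _ (Spair (- fst n - (2 * NN k1 - 1)) (4 * NN k1) (- snd n - (2 * NN k1 - 1)) (4 * NN k1)
        (- snd n - (2 * NN k3 - 1)) (4 * NN k3) (- fst n - (2 * NN k3 - 1)) (4 * NN k3) (mu / 2)) (fun t => ((fst (t1 t) - fst n, snd (t1 t) - snd n),
          (snd (t3 t) - snd n, fst (t3 t) - fst n)))) | ].
    + intros t ht. exact ht.
    + intros t t' [h _] [h' _] e. injection e as e1 e2 e3 e4. apply Hinj; auto; apply peq; lia.
    + intros t [h [d1 d3]]. destruct (gamma_facts _ _ _ h) as [_ [f1 [f3 fm]]].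
      apply box_shift with (n := n) in d1. apply box_shift with (n := n) in d3.
      unfold Spair, box1, box2, det. cbn [fst snd]. split; [split|split].
      * exact d1.
      * intro e. injection e as e1 e2. apply f1. destruct (t1 t), n; cbn [fst snd] in *; f_equal; lia.
      * tauto.
      * rewrite fm, (Z.mul_comm 2), Z.div_mul by lia. ring.
    + apply sq_count with (m := mu / 2); auto.
    + nia.
  - rewrite Nat.max_l by lia.
    eapply cnt_mono; [| apply (cnt_inj _ (Spair (- fst n - (2 * NN k3 - 1)) (4 * NN k3) (- snd n - (2 * NN k3 - 1)) (4 * NN k3)
        (- snd n - (2 * NN k1 - 1)) (4 * NN k1) (- fst n - (2 * NN k1 - 1)) (4 * NN k1) (mu / 2)) (fun t => ((fst (t3 t) - fst n, snd (t3 t) - snd n),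
          (snd (t1 t) - snd n, fst (t1 t) - fst n)))) | ].
    + intros t ht. exact ht.
    + intros t t' [h _] [h' _] e. injection e as e1 e2 e3 e4. apply Hinj; auto; apply peq; lia.
    + intros t [h [d1 d3]]. destruct (gamma_facts _ _ _ h) as [_ [f1 [f3 fm]]].
      apply box_shift with (n := n) in d1. apply box_shift with (n := n) in d3.
      unfold Spair, box1, box2, det. cbn [fst snd]. split; [split|split].
      * exact d3.
      * intro e. injection e as e1 e2. apply f3. destruct (t3 t), n; cbn [fst snd] in *; f_equal; lia.
      * tauto.
      * rewrite fm, (Z.mul_comm 2), Z.div_mul by lia. ring.
    + apply sq_count with (m := mu / 2); lia.
    + nia.
Qed.

Lemma NN_S k : NN (S k) = 2 * NN k.
Proof. unfold NN. rewrite Nat2Z.inj_succ, Z.pow_succ_r; lia. Qed.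

Lemma Hinj_gen mu n t t' : Gamma_minus mu n t -> Gamma_minus mu n t' -> t1 t = t1 t' -> t3 t = t3 t' -> t = t'.
Proof.
  intros h h' e1 e3. destruct (gamma_facts _ _ _ h) as [f2 _]. destruct (gamma_facts _ _ _ h') as [g2 _].
  rewrite e1, e3 in f2. rewrite <- g2 in f2. destruct t as [[a b] c], t' as [[a' b'] c'].
  unfold t1, t2, t3 in *; cbn [fst snd] in *. subst. reflexivity.
Qed.

Lemma bound2a (n : Z2) (mu : Z) (k1 k2 : nat) : (k1 <= k2)%nat ->
  cnt (fun t => Gamma_minus mu n t /\ dsim (t1 t) (NN k1) /\ dsim (t2 t) (NN k2))
    ((Z.of_nat (S k2) + 4) * (Z.of_nat (S k2) + 4) * (144 * (4 * NN k1) * (4 * NN (S k2)))).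
Proof.
  intro Hk.
  eapply cnt_mono; [| apply (cnt_inj _ (Spair (- fst n - (2 * NN k1 - 1)) (4 * NN k1) (- snd n - (2 * NN k1 - 1)) (4 * NN k1)
        (- (2 * NN (S k2) - 1)) (4 * NN (S k2)) (- (2 * NN (S k2) - 1)) (4 * NN (S k2)) (mu / 2)) (fun t => ((fst (t1 t) - fst n, snd (t1 t) - snd n),
          (snd (t3 t) - snd n, fst (t3 t) - fst n)))) | ].
  - intros t ht. exact ht.
  - intros t t' [h _] [h' _] e. injection e as e1 e2 e3 e4. apply (Hinj_gen mu n); auto; apply peq; lia.
  - intros t [h [d1 d2]]. destruct (gamma_facts _ _ _ h) as [f2 [f1 [f3 fm]]].
    assert (d1' := dsim_box _ _ d1). assert (d2' := dsim_box _ _ d2). fold (NN k1) (NN k2) in d1', d2'.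
    rewrite f2 in d2'. cbn [fst snd] in d2'. rewrite NN_S.
    apply box_shift with (n := n) in d1.
    assert (HAB := NN_mono _ _ Hk).
    unfold Spair, box1, box2, det, inb in *. cbn [fst snd]. split; [split|split].
    + exact d1.
    + intro e. injection e as e1 e2. apply f1. apply peq; lia.
    + lia.
    + rewrite fm, (Z.mul_comm 2), Z.div_mul by lia. ring.
  - apply sq_count with (m := mu / 2); lia.
  - lia.
Qed.

Definition ufun (n : Z2) (t : triple) : Z2 * Z2 :=
  let xj := fst (t1 t) - fst n in let xk := snd (t1 t) - snd n in
  let zj := fst (t2 t) - fst n in let zk := snd (t2 t) - snd n in
  ((2 * (xj + xk) - (zj + zk), zj - zk), (zj + zk, 2 * (xj - xk) - (zj - zk))).

Lemma bound2b (n : Z2) (mu : Z) (k1 k2 : nat) : (k2 < k1)%nat ->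
  cnt (fun t => Gamma_minus mu n t /\ dsim (t1 t) (NN k1) /\ dsim (t2 t) (NN k2))
    ((Z.of_nat k2 + 4 + 1) * (Z.of_nat k1 + 6 + 1) * (144 * (24 * NN k1) * (8 * NN k2)) + (8 * NN k2) * (24 * NN k1)).
Proof.
  intro Hk.
  set (P := 24 * NN k1). set (Sz := 8 * NN k2).
  set (c1 := - (fst n + snd n) - 12 * NN k1). set (d1 := - (fst n - snd n) - 4 * NN k2).
  set (c2 := - (fst n + snd n) - 4 * NN k2). set (d2 := - (fst n - snd n) - 12 * NN k1).
  assert (HA := NN_ge1 k1). assert (HB := NN_ge1 k2).
  assert (HAB : 2 * NN k2 <= NN k1) by (rewrite <- NN_S; apply NN_mono; lia).
  eapply cnt_mono; [| apply (cnt_inj _ (fun p => Spair c1 P d1 Sz c2 Sz d2 P (- 2 * mu) p \/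
       (fst p = (0,0) /\ box2 c2 Sz d2 P (snd p))) (ufun n)) | apply Z.le_refl].
  - intros t ht. exact ht.
  - intros t t' [h _] [h' _] e.
    assert (e1 := f_equal (fun p => fst (fst p)) e). assert (e2 := f_equal (fun p => snd (fst p)) e).
    assert (e3 := f_equal (fun p => fst (snd p)) e). assert (e4 := f_equal (fun p => snd (snd p)) e).
    unfold ufun in e1, e2, e3, e4. cbn [fst snd] in e1, e2, e3, e4.
    apply (Hinj_gen mu n); auto.
    + apply peq; lia.
    + destruct (gamma_facts _ _ _ h) as [f2 _]. destruct (gamma_facts _ _ _ h') as [g2 _].
      assert (Ea : fst (t2 t) = fst (t2 t')) by lia. assert (Eb : snd (t2 t) = snd (t2 t')) by lia.
      rewrite f2, g2 in Ea, Eb. cbn [fst snd] in Ea, Eb. apply peq; lia.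
  - intros t [h [dd1 dd2]]. destruct (gamma_facts _ _ _ h) as [f2 [f1 [f3 fm]]].
    assert (d1' := dsim_box _ _ dd1). assert (d2' := dsim_box _ _ dd2). fold (NN k1) (NN k2) in d1', d2'.
    assert (Hdet : det (fst (ufun n t)) (snd (ufun n t)) = - 2 * mu).
    { rewrite fm. unfold ufun, det. rewrite f2. cbn [fst snd]. ring. }
    assert (HR2 : box2 c2 Sz d2 P (snd (ufun n t))).
    { unfold box2, ufun, inb, c2, d2, Sz, P. cbn [fst snd]. lia. }
    destruct (classic (fst (ufun n t) = (0,0))) as [e|e].
    + right. auto.
    + left. unfold Spair. split; [split|split]; auto.
      unfold box1, ufun, inb, c1, d1, Sz, P. cbn [fst snd]. lia.
  - apply cnt_union.
    + apply core_count; try (unfold P, Sz; lia).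
      * unfold Sz. replace (Z.of_nat k2 + 4 - 1) with (Z.of_nat k2 + 3) by lia. rewrite NN_shift by lia. change (2 ^ 3) with 8. lia.
      * unfold P. replace (Z.of_nat k1 + 6 - 1) with (Z.of_nat k1 + 5) by lia. rewrite NN_shift by lia. change (2 ^ 5) with 32. lia.
      * intros l1 l2 H1 H2 H12. apply HboundR; unfold P, Sz; lia.
    + apply (cnt_inj _ (box2 c2 Sz d2 P) (@snd Z2 Z2)).
      * intros [x1 x2] [y1 y2] [e1 _] [e2 _] e. cbn [fst snd] in *. subst. auto.
      * intros p [_ hp]. auto.
      * apply cnt_box; unfold P, Sz; lia.
Qed.

Section RealPart.
Local Open Scope R_scope.

Lemma exp_ge1x x : 0 <= x -> 1 + x <= exp x.
Proof. intro H. destruct (Req_dec x 0) as [->|h]. rewrite exp_0; lra. left. apply exp_ineq1; auto. Qed.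

Lemma log_bound (theta : R) : 0 < theta -> exists C0, 0 < C0 /\
  forall k : nat, (INR k + 7) ^ 2 <= C0 * Rpower (IZR (2 ^ Z.of_nat k)) theta.
Proof.
  intros Ht. set (a := theta * ln 2 / 2).
  assert (Hl2 : 0 < ln 2) by (rewrite <- ln_1; apply ln_increasing; lra).
  assert (Ha : 0 < a) by (unfold a; apply Rmult_lt_0_compat; [apply Rmult_lt_0_compat|]; lra).
  set (c := 7 + / a).
  assert (Hc : 0 < c) by (unfold c; assert (0 < / a) by (apply Rinv_0_lt_compat; auto); lra).
  exists (c * c). split; [nra|]. intro k.
  rewrite <- pow_IZR. unfold Rpower. rewrite ln_pow by lra.
  replace (theta * (INR k * ln 2)) with ((a * INR k) + (a * INR k)) by (unfold a; field).
  rewrite exp_plus.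
  assert (Hk : 0 <= INR k) by apply pos_INR.
  assert (H1 : INR k + 7 <= c * exp (a * INR k)).
  { assert (1 + a * INR k <= exp (a * INR k)) by (apply exp_ge1x; nra).
    assert (INR k + 7 <= c * (1 + a * INR k)).
    { unfold c. rewrite Rmult_plus_distr_r, Rmult_plus_distr_l.
      assert (/ a * (a * INR k) = INR k) by (field; lra).
      assert (0 <= / a) by (left; apply Rinv_0_lt_compat; auto). nra. }
    nra. }
  assert (0 <= INR k + 7) by lra. simpl. nra.
Qed.

End RealPart.

Lemma NN_max a b : Z.max (NN a) (NN b) = NN (Nat.max a b).
Proof.
  destruct (Nat.max_spec a b) as [[h e]|[h e]]; rewrite e.
  - apply Z.max_r. apply NN_mono; lia.
  - apply Z.max_l. apply NN_mono; lia.
Qed.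

Lemma to_card {T} (S : T -> Prop) (B : Z) (C0 theta : R) (a b K : nat) :
  (forall k : nat, ((INR k + 7) ^ 2 <= C0 * Rpower (IZR (2 ^ Z.of_nat k)) theta)%R) ->
  cnt S B -> B <= 30000 * ((Z.of_nat K + 7) * (Z.of_nat K + 7)) * (NN a * NN b) ->
  card_le S (30000 * C0 * IZR (NN a) * IZR (NN b) * Rpower (IZR (NN K)) theta)%R.
Proof.
  intros HC Hc HB l Hl Hin. specialize (Hc l Hl Hin).
  rewrite INR_IZR_INZ. apply Rle_trans with (IZR B); [apply IZR_le; lia|].
  apply Rle_trans with (IZR (30000 * ((Z.of_nat K + 7) * (Z.of_nat K + 7)) * (NN a * NN b))); [apply IZR_le; lia|].
  rewrite !mult_IZR, plus_IZR, <- INR_IZR_INZ.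
  specialize (HC K). unfold NN.
  assert (Ha : (1 <= IZR (2 ^ Z.of_nat a))%R) by (apply IZR_le; apply pow_pos1; lia).
  assert (Hb : (1 <= IZR (2 ^ Z.of_nat b))%R) by (apply IZR_le; apply pow_pos1; lia).
  set (x := IZR (2 ^ Z.of_nat a)) in *. set (y := IZR (2 ^ Z.of_nat b)) in *.
  set (R := Rpower (IZR (2 ^ Z.of_nat K)) theta) in *. simpl in HC.
  assert (0 <= x * y)%R by nra.
  assert ((INR K + 7) * (INR K + 7) * (x * y) <= C0 * R * (x * y))%R.
  { apply Rmult_le_compat_r; auto. lra. }
  lra.
Qed.

Theorem lemma2p1 :
  forall theta : R, (0 < theta)%R ->
  exists C : R, (0 < C)%R /\
  forall (n : Z * Z) (mu : Z) (k1 k2 k3 : nat),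
    let N1 := (2 ^ Z.of_nat k1)%Z in
    let N2 := (2 ^ Z.of_nat k2)%Z in
    let N3 := (2 ^ Z.of_nat k3)%Z in
    card_le (fun t => Gamma_minus mu n t /\ dsim (t1 t) N1 /\ dsim (t3 t) N3)
      (C * IZR N1 * IZR N3 * Rpower (IZR (Z.max N1 N3)) theta)%R /\
    card_le (fun t => Gamma_minus mu n t /\ dsim (t1 t) N1 /\ dsim (t2 t) N2)
      (C * IZR N1 * IZR N2 * Rpower (IZR (Z.max N1 N2)) theta)%R.
Proof.
  intros theta Ht. destruct (log_bound theta Ht) as [C0 [HC0 HC]].
  exists (30000 * C0)%R. split; [lra|].
  intros n mu k1 k2 k3. cbv zeta.
  change (2 ^ Z.of_nat k1) with (NN k1). change (2 ^ Z.of_nat k2) with (NN k2).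
  change (2 ^ Z.of_nat k3) with (NN k3). rewrite !NN_max.
  assert (H1 := NN_ge1 k1). assert (H2 := NN_ge1 k2). assert (H3 := NN_ge1 k3).
  split.
  - eapply to_card; [exact HC | apply bound1 |].
    set (K := Z.of_nat (Nat.max k1 k3)). assert (0 <= K) by lia. nia.
  - destruct (le_lt_dec k1 k2) as [Hk|Hk].
    + eapply to_card; [exact HC | apply bound2a; auto |].
      rewrite Nat.max_r by lia. rewrite NN_S. rewrite Nat2Z.inj_succ. nia.
    + eapply to_card; [exact HC | apply bound2b; auto |].
      rewrite Nat.max_l by lia.
      assert (Z.of_nat k2 + 5 <= Z.of_nat k1 + 7) by lia. nia.
Qed.
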